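(* If $n$ is a positive integer, then $$\sum_{k = 1}^n \sum_{j = 0}^{k - 1} ( - 1)^{n - j} \frac{( n - j - 1)!}{n - j + 1}\left\{ {n \atop n - j} \right\} = B_n .$$
   Context: $\left\{ {n \atop m} \right\}$ denotes the Stirling number of the second kind. $B_n$ are the Bernoulli numbers, defined by $\frac{t}{e^t-1}=\sum_{n\ge0}B_n\frac{t^n}{n!}$ (so $B_1=-1/2$). *)

(* Defs.v *)
From mathcomp Require Import all_boot all_order all_algebra.
Set Implicit Arguments. Unset Strict Implicit. Unset Printing Implicit Defensive.
Import Order.TTheory GRing.Theory Num.Theory.
Local Open Scope ring_scope.

Fixpoint stirling2 (n k : nat) : nat :=
  match n, k with
  | 0, 0 => 1
  | 0, _.+1 => 0
  | _.+1, 0 => 0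
  | n'.+1, k'.+1 => (k'.+1 * stirling2 n' k + stirling2 n' k')%N
  end.

(* Bernoulli numbers B_n with t/(e^t-1) = sum_n B_n t^n/n!  (so B_1 = -1/2).
   Comparing coefficients of t^n in ((e^t-1)/t) * (sum_m B_m t^m/m!) = 1 gives
   sum_{m<=n} C(n+1,m) B_m = [n = 0], i.e. B_0 = 1 and
   B_n = -1/(n+1) * sum_{m<n} C(n+1,m) B_m for n >= 1.
   bern_list n = [:: B_0; ...; B_n]. *)
Fixpoint bern_list (n : nat) : seq rat :=
  match n with
  | 0 => [:: 1]
  | n'.+1 =>
      let s := bern_list n' in
      rcons s (- (n'.+2%:R)^-1 * \sum_(m < n'.+1) ('C(n'.+2, m))%:R * s`_m)
  end.

Definition bernoulli (n : nat) : rat := (bern_list n)`_n.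

(* Main.v *)
Require Import Defs.
From mathcomp Require Import all_boot all_order all_algebra.
From mathcomp Require Import zify ring.
Import GRing.Theory Num.Theory.

Notation St := stirling2.

Lemma S_gt k m : (k < m)%N -> St k m = 0%N.
Proof.
elim: k m => [|k IH] [|m] //= H.
by rewrite (IH m.+1) ?(IH m) //; lia.
Qed.

Arguments S_gt {k m}.
Lemma S_n0 n : St n.+1 0 = 0%N. Proof. by []. Qed.

Lemma convS n : forall m, (\sum_(k < n.+1) 'C(n,k) * St k m)%N = St n.+1 m.+1.
Proof.
elim: n => [|n IH] m.
  by rewrite big_ord_recl big_ord0 /= muln0 !add0n addn0 mul1n.
have E : (\sum_(k < n.+2) 'C(n.+1,k) * St k m =
   \sum_(k<n.+1) 'C(n,k) * St k m + \sum_(k < n.+1) 'C(n,k) * St k.+1 m)%N.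
  rewrite big_ord_recl /= bin0 mul1n.
  rewrite (eq_bigr (fun k : 'I_n.+1 => 'C(n, k.+1) * St k.+1 m + 'C(n,k) * St k.+1 m)%N);
    last by move=> i _; rewrite /bump /= add1n binS mulnDl.
  rewrite big_split /= addnA; congr (_ + _)%N.
  rewrite [in RHS]big_ord_recl /= bin0 mul1n; congr (_ + _)%N.
  by rewrite big_ord_recr /= bin_small // mul0n addn0.
rewrite E IH; clear E.
case: m => [|m].
  rewrite big1 ?addn0; last by move=> i _; rewrite muln0.
  by rewrite [in RHS]/= mul1n addn0.
rewrite (eq_bigr (fun k : 'I_n.+1 => m.+1 * ('C(n,k) * St k m.+1) + 'C(n,k) * St k m)%N);
  last by move=> i _ /=; ring.
rewrite big_split -big_distrr !IH.
have -> : St n.+2 m.+2 = (m.+2 * St n.+1 m.+2 + St n.+1 m.+1)%N by [].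
rewrite /=; lia.
Qed.

Lemma SS n m : St n.+1 m.+1 = (m.+1 * St n m.+1 + St n m)%N. Proof. by []. Qed.

Lemma convS' n m : (\sum_(k < n.+1) 'C(n.+1,k) * St k m)%N = (m.+1 * St n.+1 m.+1)%N.
Proof.
have := convS n.+1 m; rewrite SS big_ord_recr /= binn mul1n => H.
by apply/eqP; rewrite -(eqn_add2r (St n.+1 m)) H.
Qed.

Local Open Scope ring_scope.

Definition f (m : nat) : rat := (-1) ^+ m * (m`!)%:R / (m.+1)%:R.
Definition b (n : nat) : rat := \sum_(m < n.+1) f m * (St n m)%:R.

Lemma dS n : \sum_(m < n.+1) (-1) ^+ m * (m`!)%:R * (St n.+1 m.+1)%:R = (St n 0)%:R :> rat.
Proof.
rewrite (eq_bigr (fun m : 'I_n.+1 => (-1) ^+ m * (m.+1`!)%:R * (St n m.+1)%:R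
     + (-1) ^+ m * (m`!)%:R * (St n m)%:R)); last first.
  by move=> i _; rewrite SS natrD natrM factS natrM; ring.
rewrite big_split /= big_ord_recr /= [X in _ + X]big_ord_recl /=.
rewrite (S_gt (ltnSn n)) mulr0 addr0 expr0 mul1r mul1r addrC -addrA.
rewrite -big_split /= big1 ?addr0 // => i _.
rewrite /bump /= add1n exprS; ring.
Qed.

Lemma bN_eq N k : (k < N)%N -> \sum_(m < N) f m * (St k m)%:R = b k.
Proof.
move=> kN; rewrite /b (big_ord_widen N (fun m => f m * (St k m)%:R) kN).
rewrite [in RHS]big_mkcond /=; apply: eq_bigr => i _.
case: ifP => // /negbT; rewrite -leqNgt => H.
by rewrite S_gt // mulr0.
Qed.

Lemma b_rec n : \sum_(k < n.+1) ('C(n.+1,k))%:R * b k = (n == 0%N)%:R :> rat.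
Proof.
rewrite (eq_bigr (fun k : 'I_n.+1 => ('C(n.+1,k))%:R *
      \sum_(m < n.+2) f m * (St k m)%:R)); last first.
  by move=> k _; rewrite bN_eq // ltnS ltnW.
rewrite (eq_bigr (fun k : 'I_n.+1 => \sum_(m < n.+2) f m * ('C(n.+1,k) * St k m)%:R)); last first.
  by move=> k _; rewrite big_distrr /=; apply: eq_bigr => m _; rewrite natrM; ring.
rewrite exchange_big /=.
rewrite (eq_bigr (fun m : 'I_n.+2 => (-1) ^+ m * (m`!)%:R * (St n.+1 m.+1)%:R)); last first.
  move=> m _; rewrite -big_distrr /= -natr_sum convS' natrM /f.
  by rewrite -SS mulrA divfK // pnatr_eq0.
rewrite big_ord_recr (S_gt (ltnSn n.+1)) /= dS mulr0 addr0.
by case: n.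
Qed.

Lemma size_bern n : size (bern_list n) = n.+1.
Proof. by elim: n => [|n IH] //=; rewrite size_rcons IH. Qed.

Lemma nth_bern n m : (m <= n)%N -> (bern_list n)`_m = bernoulli m.
Proof.
elim: n => [|n IH]; first by rewrite leqn0 => /eqP ->.
rewrite leq_eqVlt => /orP [/eqP -> //|]; rewrite ltnS => H.
by rewrite /= nth_rcons size_bern ltnS H IH.
Qed.

Lemma bern_rec n : bernoulli n.+1 =
  - (n.+2%:R)^-1 * \sum_(m < n.+1) ('C(n.+2, m))%:R * bernoulli m.
Proof.
rewrite /bernoulli /= nth_rcons size_bern ltnn eqxx; congr (_ * _).
by apply: eq_bigr => i _; rewrite nth_bern // -ltnS.
Qed.

Lemma b_bern n : b n = bernoulli n.
Proof.
elim/ltn_ind: n => [[|n]] IH.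
  rewrite /b big_ord_recl big_ord0 /f /= addr0; by apply/eqP.
have := b_rec n.+1; rewrite big_ord_recr /= binSn => H.
rewrite bern_rec.
have nz : (n.+2%:R : rat) != 0 by rewrite pnatr_eq0.
apply: (mulfI nz); rewrite mulrA mulrN mulfV // mulN1r.
apply/eqP; rewrite -addr_eq0 addrC -[X in _ == X]H.
apply/eqP; congr (_ + _); apply: eq_bigr => i _; by rewrite IH.
Qed.

Lemma tri (g : nat -> rat) K :
  \sum_(1 <= k < K.+1) \sum_(0 <= j < k) g j = \sum_(0 <= j < K) (K - j)%:R * g j.
Proof.
elim: K => [|K IH]; first by rewrite !big_geq.
rewrite big_nat_recr //= IH [in RHS]big_nat_recr //= subSnn mul1r.
rewrite [X in _ + X]big_nat_recr //= addrA; congr (_ + _).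
rewrite -big_split /=; apply: eq_big_nat => j /andP [_ Hj].
by rewrite subSn 1?ltnW // -addn1 natrD; ring.
Qed.

Theorem proposition6 (n : nat) (hn : (0 < n)%N) :
  \sum_(1 <= k < n.+1) \sum_(0 <= j < k)
     (-1) ^+ (n - j) * ((n - j - 1)`!)%:R / ((n - j + 1)%N)%:R
       * (stirling2 n (n - j))%:R
  = bernoulli n :> rat.
Proof.
rewrite tri -b_bern /b big_ord_recl.
case: n hn => [//|n] _.
rewrite /= mulr0 add0r big_nat_rev /= add0n -(big_mkord xpredT (fun i => f i.+1 * (St n.+1 i.+1)%:R)).
apply: eq_big_nat => i /andP [_ Hi].
have E : (n.+1 - (n.+1 - i.+1) = i.+1)%N by lia.
rewrite E subn1 /= addn1 /f factS natrM; ring.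
Qed.
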